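(* Let $R$ be a ring and $T$ a right $R$-module possessing a projective resolution $\sigma$ such that the first syzygy $\Omega^1(T)$ of $T$ in $\sigma$ has a projective cover. Then $T$ is $\tau$-rigid if and only if $\operatorname{Gen}T\subseteq T^{\perp}$.
   Context: A module $T$ is ($\tau$-rigid) if there exists a projective presentation $P_1\xrightarrow{\varphi}P_0\to T\to 0$ such that $\operatorname{Hom}_R(\varphi,M):\operatorname{Hom}_R(P_0,M)\to\operatorname{Hom}_R(P_1,M)$ is surjective for every $M\in\operatorname{Gen}T$. $\operatorname{Gen}T$ is the class of epimorphic images of direct sums of copies of $T$, and $T^{\perp}=\{M:\operatorname{Ext}^1_R(T,M)=0\}$. *)

(* Defs.v *)
From HB Require Import structures.
From mathcomp Require Import all_boot all_algebra.
Set Implicit Arguments. Unset Strict Implicit. Unset Printing Implicit Defensive.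
Import GRing.Theory.
Local Open Scope ring_scope.

(* Right R-modules are left modules over the converse ring R^c. *)
Notation rmodType R := (lmodType (GRing.converse R)).

Definition surj (A B : Type) (f : A -> B) : Prop := forall y, exists x, f x = y.

Definition projective (R : pzRingType) (P : rmodType R) : Prop :=
  forall (M N : rmodType R) (g : {linear M -> N}) (f : {linear P -> N}),
    surj g -> exists h : {linear P -> M}, forall x, g (h x) = f x.

(* Gen T : epimorphic images of direct sums T^(I); a linear map T^(I) -> M is a
   family (f_i)_{i in I} of linear maps T -> M, and it is onto iff every m is a
   finite sum of f_i(t_i). *)
Definition Gen (R : pzRingType) (T M : rmodType R) : Prop :=
  exists (I : Type) (f : I -> {linear T -> M}),
    forall m : M, exists s : seq (I * T), m = \sum_(p <- s) f p.1 p.2.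

(* Ext^1_R(T, M) = 0 (Yoneda): every short exact sequence 0 -> M -> E -> T -> 0 splits. *)
Definition Ext1_zero (R : pzRingType) (T M : rmodType R) : Prop :=
  forall (E : rmodType R) (i : {linear M -> E}) (p : {linear E -> T}),
    injective i -> surj p -> (forall e, p e = 0 <-> exists m, e = i m) ->
    exists s : {linear T -> E}, forall t, p (s t) = t.

Definition perp (R : pzRingType) (T M : rmodType R) : Prop := Ext1_zero T M.

Definition tau_rigid (R : pzRingType) (T : rmodType R) : Prop :=
  exists (P1 P0 : rmodType R) (phi : {linear P1 -> P0}) (pi : {linear P0 -> T}),
    [/\ projective P1, projective P0, surj pi,
        (forall x, pi x = 0 <-> exists y, x = phi y) &
        forall M : rmodType R, Gen T M ->
          forall g : {linear P1 -> M}, exists h : {linear P0 -> M},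
            forall y, h (phi y) = g y].

Definition proj_resolution (R : pzRingType) (T : rmodType R)
  (P : nat -> rmodType R) (d : forall n, {linear P n.+1 -> P n})
  (eps : {linear P 0 -> T}) : Prop :=
  [/\ forall n, projective (P n), surj eps,
      (forall x, eps x = 0 <-> exists y, x = d 0 y) &
      forall n (x : P n.+1), d n x = 0 <-> exists y, x = d n.+1 y].

Definition superfluous_kernel (R : pzRingType) (Q X : rmodType R) (q : {linear Q -> X}) : Prop :=
  forall L : {pred Q}, submod_closed L ->
    (forall x, exists k l, q k = 0 /\ l \in L /\ x = k + l) -> forall x, x \in L.

(* The first syzygy Omega^1 = ker (eps : P 0 -> T) has a projective cover:
   a projective Q with q : Q -> P 0 mapping onto ker eps, with superfluous kernel. *)
Definition syzygy1_has_proj_cover (R : pzRingType) (T : rmodType R)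
  (P0 : rmodType R) (eps : {linear P0 -> T}) : Prop :=
  exists (Q : rmodType R) (q : {linear Q -> P0}),
    [/\ projective Q, (forall x, eps x = 0 <-> exists y, x = q y) & superfluous_kernel q].

(* Main.v *)
Require Import Defs.
From HB Require Import structures.
From mathcomp Require Import all_boot all_algebra.
From Stdlib Require Import ClassicalEpsilon FunctionalExtensionality PropExtensionality.
Set Implicit Arguments. Unset Strict Implicit. Unset Printing Implicit Defensive.
Import GRing.Theory.
Local Open Scope ring_scope.

Section MkLin.
Variables (K : pzRingType) (U V : lmodType K) (f : U -> V).
Hypothesis Hf : forall a x y, f (a *: x + y) = a *: f x + f y.
Definition mkfun := f.
Let Hl : linear_for *:%R mkfun.
Proof. move=> a x y; exact: Hf. Qed.
HB.instance Definition _ := GRing.isLinear.Build K U V *:%R mkfun Hl.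
Definition mklin : {linear U -> V} := mkfun.
Lemma mklinE x : mklin x = f x. Proof. by []. Qed.
End MkLin.

Lemma mk_lin_rel (K : pzRingType) (U V : lmodType K) (rel : U -> V -> Prop) :
  (forall u, exists v, rel u v) ->
  (forall u v v', rel u v -> rel u v' -> v = v') ->
  (forall a u u' v v', rel u v -> rel u' v' -> rel (a *: u + u') (a *: v + v')) ->
  exists F : {linear U -> V}, forall u, rel u (F u).
Proof.
move=> tot fn lin.
pose F u := proj1_sig (constructive_indefinite_description _ (tot u)).
have FP u : rel u (F u) by rewrite /F; case: constructive_indefinite_description.
have HF a x y : F (a *: x + y) = a *: F x + F y.
  by apply: (fn (a *: x + y)); [apply: FP | apply: lin; apply: FP].
by exists (mklin HF) => u; rewrite mklinE.
Qed.

Record subm (K : pzRingType) (A : lmodType K) := Subm {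
  sp :> A -> Prop;
  sp0 : sp 0;
  splin : forall a x y, sp x -> sp y -> sp (a *: x + y) }.

Definition pb (P : Prop) : bool := if excluded_middle_informative P then true else false.
Lemma pbP (P : Prop) : pb P <-> P.
Proof. by rewrite /pb; case: excluded_middle_informative. Qed.

Section Quot.
Variables (K : pzRingType) (A : lmodType K) (S : subm A).
Let S0 : S 0 := sp0 S.
Let Slin : forall a x y, S x -> S y -> S (a *: x + y) := @splin _ _ S.

Lemma SD x y : S x -> S y -> S (x + y).
Proof. by move=> ? ?; rewrite -[x]scale1r; apply: Slin. Qed.
Lemma SN x : S x -> S (- x).
Proof. by move=> ?; rewrite -[- x]addr0 -scaleN1r; apply: Slin. Qed.
Lemma SB x y : S x -> S y -> S (x - y).
Proof. by move=> ? ?; apply: SD => //; apply: SN. Qed.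
Lemma SZ a x : S x -> S (a *: x).
Proof. by move=> ?; rewrite -[_ *: _]addr0; apply: Slin. Qed.

Definition cls (a : A) := fun b => S (a - b).
Definition rep (a : A) : A := epsilon (inhabits 0) (cls a).
Lemma rep_spec a : S (a - rep a).
Proof. by apply: (epsilon_spec (inhabits 0) (cls a)); exists a; rewrite /cls subrr. Qed.
Lemma rep_eq a b : S (a - b) -> rep a = rep b.
Proof.
move=> Sab; rewrite /rep; congr epsilon; apply: functional_extensionality => c.
apply: propositional_extensionality; rewrite /cls; split => H.
  by have := SB H Sab; rewrite opprB addrC addrA subrK.
by have := SD Sab H; rewrite addrA subrK.
Qed.
Lemma rep_eqE a b : rep a = rep b -> S (a - b).
Proof.
move=> E; have := SB (rep_spec a) (rep_spec b); rewrite E.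
by rewrite opprB addrA subrK.
Qed.
Lemma rep_rep a : rep (rep a) = rep a.
Proof. apply: rep_eq; rewrite -opprB; apply: SN; exact: rep_spec. Qed.

Definition QT := {a : A | rep a == a}.
HB.instance Definition _ := Choice.on QT.
Definition pr (a : A) : QT := exist _ (rep a) (introT eqP (rep_rep a)).
Lemma prK (x : QT) : pr (val x) = x.
Proof. case: x => a Ha; apply: val_inj => /=; exact/eqP. Qed.
Lemma pr_eqP a b : pr a = pr b <-> S (a - b).
Proof.
split=> [E|H]; first by apply: rep_eqE; have := congr1 val E.
by apply: val_inj => /=; apply: rep_eq.
Qed.

Definition qzero := pr 0.
Definition qadd (x y : QT) := pr (val x + val y).
Definition qopp (x : QT) := pr (- val x).
Definition qscale (c : K) (x : QT) := pr (c *: val x).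

Lemma S_val_pr a : S (val (pr a) - a).
Proof. by rewrite -opprB; apply: SN; apply: rep_spec. Qed.

Lemma qaddE a b : qadd (pr a) (pr b) = pr (a + b).
Proof.
apply/pr_eqP; have := SD (S_val_pr a) (S_val_pr b).
by rewrite opprD addrACA.
Qed.
Lemma qoppE a : qopp (pr a) = pr (- a).
Proof. by apply/pr_eqP; rewrite opprK addrC -opprB; apply: SN; apply: S_val_pr. Qed.
Lemma qscaleE c a : qscale c (pr a) = pr (c *: a).
Proof. by apply/pr_eqP; rewrite -scalerBr; apply: SZ; apply: S_val_pr. Qed.

Lemma QT_ind (P : QT -> Prop) : (forall a, P (pr a)) -> forall x, P x.
Proof. by move=> H x; rewrite -(prK x). Qed.

Lemma qaddA : associative qadd.
Proof. by elim/QT_ind => a; elim/QT_ind => b; elim/QT_ind => c; rewrite !qaddE addrA. Qed.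
Lemma qaddC : commutative qadd.
Proof. by elim/QT_ind => a; elim/QT_ind => b; rewrite !qaddE addrC. Qed.
Lemma qadd0 : left_id qzero qadd.
Proof. by elim/QT_ind => a; rewrite /qzero qaddE add0r. Qed.
Lemma qaddN : left_inverse qzero qopp qadd.
Proof. by elim/QT_ind => a; rewrite qoppE qaddE addNr. Qed.

HB.instance Definition _ := GRing.isZmodule.Build QT qaddA qaddC qadd0 qaddN.
Lemma prD a b : pr a + pr b = pr (a + b). Proof. exact: qaddE. Qed.

Lemma qscaleA a b v : qscale a (qscale b v) = qscale (a * b) v.
Proof. by elim/QT_ind: v => v; rewrite !qscaleE scalerA. Qed.
Lemma qscale1 : left_id 1 qscale.
Proof. by elim/QT_ind => v; rewrite qscaleE scale1r. Qed.
Lemma qscaleDr : right_distributive qscale +%R.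
Proof.
move=> a; elim/QT_ind => u; elim/QT_ind => v.
by rewrite prD !qscaleE prD scalerDr.
Qed.
Lemma qscaleDl v : {morph qscale^~ v: a b / a + b}.
Proof. by elim/QT_ind: v => v a b /=; rewrite !qscaleE prD scalerDl. Qed.

HB.instance Definition _ := GRing.Zmodule_isLmodule.Build K QT qscaleA qscale1 qscaleDr qscaleDl.

Lemma pr_lin a x y : pr (a *: x + y) = a *: pr x + pr y.
Proof. by rewrite -prD; congr (_ + _); rewrite -qscaleE. Qed.

Definition prl : {linear A -> QT} := mklin pr_lin.
Lemma prlE a : prl a = pr a. Proof. by []. Qed.
Lemma prl_surj : forall y : QT, exists x, prl x = y.
Proof. by elim/QT_ind => a; exists a. Qed.
Lemma prl_eq a b : prl a = prl b <-> S (a - b).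
Proof. exact: pr_eqP. Qed.
Lemma prl_eq0 a : prl a = 0 <-> S a.
Proof. have := prl_eq a 0; rewrite raddf0 subr0; done. Qed.
End Quot.
Lemma dir1 (R : pzRingType) (T : rmodType R) :
  tau_rigid T -> forall M, Gen T M -> perp T M.
Proof.
case=> P1 [P0 [phi [pi [pP1 pP0 spi kpi Hext]]]] M GM E i p inji sp kp.
have pi0 m : p (i m) = 0 by apply/kp; exists m.
have [h0 Hh0] := pP0 E T p pi sp.
have [g Hg] : exists g : {linear P1 -> M}, forall y, i (g y) = h0 (phi y).
  apply: (mk_lin_rel (rel := fun y m => i m = h0 (phi y))).
  - move=> y; have [m ->] : exists m, h0 (phi y) = i m.
      by apply/kp; rewrite Hh0; apply/kpi; exists y.
    by exists m.
  - by move=> u v v' H1 H2; apply: inji; rewrite H1 H2.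
  - by move=> a u u' v v' H1 H2; rewrite !linearP H1 H2.
have [h Hh] := Hext M GM g.
have [s Hs] : exists s : {linear T -> E}, forall t,
    exists x, pi x = t /\ s t = h0 x - i (h x).
  apply: (mk_lin_rel (rel := fun t e => exists x, pi x = t /\ e = h0 x - i (h x))).
  - move=> t; have [x <-] := spi t; by exists (h0 x - i (h x)), x.
  - move=> t v v' [x [<- ->]] [x' [Ex ->]].
    have : pi (x - x') = 0 by rewrite linearB /= Ex subrr.
    case/kpi => y Hy.
    have : h0 (x - x') - i (h (x - x')) = 0 by rewrite Hy Hh Hg subrr.
    rewrite !linearB /= => H; apply/eqP; rewrite -subr_eq0; apply/eqP.
    by rewrite -H opprD addrACA.
  - move=> a t t' v v' [x [<- ->]] [x' [<- ->]]; exists (a *: x + x'); split.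
      by rewrite linearP.
    by rewrite !linearP /= scalerBr scalerN addrACA.
exists s => t; have [x [<- ->]] := Hs t.
by rewrite linearB /= Hh0 pi0 subr0.
Qed.
Lemma pairP (K : pzRingType) (U V : lmodType K) (a : K) (x x' : U) (n n' : V) :
  (a *: x + x', a *: n + n') = a *: (x, n) + (x', n') :> (U * V)%type.
Proof. by []. Qed.

Lemma dir2 (R : pzRingType) (T : rmodType R)
  (P : nat -> rmodType R) (d : forall n, {linear P n.+1 -> P n})
  (eps : {linear P 0 -> T}) :
  proj_resolution d eps ->
  syzygy1_has_proj_cover eps ->
  (forall M : rmodType R, Gen T M -> perp T M) -> tau_rigid T.
Proof.
case=> pP seps keps _ [Q [q [pQ kq sk]]] HG.
exists Q, (P 0), q, eps; split; [exact: pQ | exact: pP | exact: seps | exact: kq | ].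
move=> M GM g.
have qeps y : eps (q y) = 0 by apply/kq; exists y.
pose SK := fun m : M => exists y, q y = 0 /\ m = g y.
have SK0 : SK 0 by exists 0; rewrite !raddf0.
have SKl : forall a x y, SK x -> SK y -> SK (a *: x + y).
  by move=> a _ _ [y [Hy ->]] [y' [Hy' ->]]; exists (a *: y + y'); rewrite !linearP Hy Hy' scaler0 addr0.
pose SKm := Subm SK0 SKl.
pose N := QT SKm.
have [rho [rho_surj rho_eq0]] : exists rho : {linear M -> N},
    (forall n, exists m, rho m = n) /\ forall m, rho m = 0 <-> SK m.
  by exists (prl SKm); split; [exact: prl_surj | exact: prl_eq0].
have rhog0 y : q y = 0 -> rho (g y) = 0.
  by move=> Hy; apply/rho_eq0; exists y.
have GN : Gen T N.
  case: GM => I [f Hf]; exists I, (fun i => rho \o f i : {linear T -> N}).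
  move=> n; have [m <-] := rho_surj n; have [s ->] := Hf m; exists s.
  by rewrite raddf_sum.
have PN := HG N GN.
pose SE := fun z : (P 0 * N)%type => exists y, z.1 = q y /\ z.2 = - rho (g y).
have SE0 : SE 0 by exists 0; rewrite !raddf0.
have SEl : forall a x y, SE x -> SE y -> SE (a *: x + y).
  move=> a [x1 x2] [y1 y2] [u /= [-> ->]] [v /= [-> ->]]; exists (a *: u + v) => /=.
  by rewrite !linearP.
pose SEm := Subm SE0 SEl.
pose E := QT SEm.
have [pE [pE_surj pE_eq]] : exists pE : {linear (P 0 * N)%type -> E},
    (forall e, exists z, pE z = e) /\ forall z z', pE z = pE z' <-> SE (z - z').
  by exists (prl SEm); split; [exact: prl_surj | exact: prl_eq].
have [i Hi] : exists i : {linear N -> E}, forall n, i n = pE (0, n).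
  apply: (mk_lin_rel (rel := fun n e => e = pE (0, n))).
  - by move=> n; exists (pE (0, n)).
  - by move=> u v v' -> ->.
  - by move=> a u u' v v' -> ->; rewrite -linearP -pairP scaler0 addr0.
have fnE z z' : pE z = pE z' -> eps z.1 = eps z'.1.
  move/pE_eq => [y /= [Hy _]]; apply/eqP; rewrite -subr_eq0 -linearB /=.
  by rewrite Hy qeps.
have [p Hp] : exists p : {linear E -> T}, forall e, exists z, pE z = e /\ p e = eps z.1.
  apply: (mk_lin_rel (rel := fun e t => exists z, pE z = e /\ t = eps z.1)).
  - by move=> e; have [z <-] := pE_surj e; exists (eps z.1), z.
  - by move=> e t t' [z [<- ->]] [z' [/fnE Ez ->]].
  - move=> a e e' t t' [z [<- ->]] [z' [<- ->]]; exists (a *: z + z'); split.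
      by rewrite linearP.
    by rewrite -linearP.
have pE_p z : p (pE z) = eps z.1.
  by have [z' [/fnE Ez ->]] := Hp (pE z).
have inji : injective i.
  move=> n n'; rewrite !Hi => /pE_eq [y /= [Hy Hn]].
  move: Hy; rewrite subr0 => /esym /rhog0 Hr.
  by apply/eqP; rewrite -subr_eq0 Hn Hr oppr0.
have sp : surj p.
  by move=> t; have [x <-] := seps t; exists (pE (x, 0)); rewrite pE_p.
have kp : forall e, p e = 0 <-> exists n, e = i n.
  move=> e; have [z <-] := pE_surj e; rewrite pE_p; split.
    case/kq => y Hy; exists (z.2 + rho (g y)); rewrite Hi; apply/pE_eq.
    exists y => /=; split; first by rewrite subr0.
    by rewrite opprD addrA subrr add0r.
  by case=> n; rewrite Hi => /fnE ->; rewrite raddf0.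
have [s Hs] := PN E i p inji sp kp.
have [h' Hh'] : exists h' : {linear P 0 -> N}, forall x, i (h' x) = pE (x, 0) - s (eps x).
  apply: (mk_lin_rel (rel := fun x n => i n = pE (x, 0) - s (eps x))).
  - move=> x; have [n ->] : exists n, pE (x, 0) - s (eps x) = i n.
      by apply/kp; rewrite linearB /= pE_p Hs subrr.
    by exists n.
  - by move=> u v v' H1 H2; apply: inji; rewrite H1 H2.
  - move=> a u u' v v' H1 H2; rewrite linearP H1 H2.
    have -> : (a *: u + u', 0) = a *: (u, 0) + (u', 0) :> (P 0 * N)%type.
      by rewrite -pairP scaler0 addr0.
    by rewrite !linearP /= scalerBr scalerN addrACA.
have Hh'q y : h' (q y) = rho (g y).
  apply: inji; rewrite Hh' qeps raddf0 subr0 Hi; apply/pE_eq.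
  by exists y => /=; rewrite subr0 add0r.
have [h1 Hh1] := pP 0 M N rho h' rho_surj.
have Hd y : SK (g y - h1 (q y)).
  by apply/rho_eq0; rewrite linearB /= Hh1 Hh'q subrr.
pose SZ := fun y : Q => q y = 0 /\ g y = 0.
have SZ0 : SZ 0 by rewrite /SZ !raddf0.
have SZl : forall a x y, SZ x -> SZ y -> SZ (a *: x + y).
  rewrite /SZ => a x y [H1 H2] [H3 H4]; by rewrite !linearP H1 H2 H3 H4 !scaler0 !addr0.
pose SZm := Subm SZ0 SZl.
pose Z := QT SZm.
have [pZ [pZ_surj pZ_eq]] : exists pZ : {linear Q -> Z},
    (forall e, exists z, pZ z = e) /\ forall z z', pZ z = pZ z' <-> SZ (z - z').
  by exists (prl SZm); split; [exact: prl_surj | exact: prl_eq].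
have [f Hf] : exists f : {linear Q -> Z}, forall y,
    exists k, [/\ q k = 0, g k = g y - h1 (q y) & f y = pZ k].
  apply: (mk_lin_rel (rel := fun y z => exists k, [/\ q k = 0, g k = g y - h1 (q y) & z = pZ k])).
  - by move=> y; have [k [Hk ->]] := Hd y; exists (pZ k), k.
  - move=> y z z' [k [Hk Hgk ->]] [k' [Hk' Hgk' ->]]; apply/pZ_eq.
    by split; rewrite linearB /= ?Hk ?Hk' ?Hgk ?Hgk' subrr.
  - move=> a y y' z z' [k [Hk Hgk ->]] [k' [Hk' Hgk' ->]].
    exists (a *: k + k'); split; last by rewrite linearP.
      by rewrite linearP Hk Hk' scaler0 addr0.
    by rewrite !linearP Hgk Hgk' /= scalerBr scalerN addrACA.
have [psi Hpsi] := pQ Q Z pZ f pZ_surj.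
have Hpsi' y : q (psi y) = 0 /\ g (psi y) = g y - h1 (q y).
  have [k [Hk Hgk Hfk]] := Hf y.
  move: (Hpsi y); rewrite Hfk => /pZ_eq [].
  rewrite !linearB /= => /eqP; rewrite subr_eq0 => /eqP ->.
  by move/eqP; rewrite subr_eq0 => /eqP ->.
pose L : {pred Q} := fun x => pb (exists y, x = y - psi y).
have HL : submod_closed L.
  split.
    by rewrite unfold_in /L; apply/pbP; exists 0; rewrite raddf0 subr0.
  move=> a u v; rewrite !unfold_in /L => /pbP [y ->] /pbP [y' ->]; apply/pbP.
  exists (a *: y + y'); by rewrite linearP scalerBr opprD addrACA -opprD.
have cover x : exists k l, q k = 0 /\ l \in L /\ x = k + l.
  exists (psi x), (x - psi x); split; first by case: (Hpsi' x).
  split; last by rewrite addrC subrK.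
  by rewrite unfold_in /L; apply/pbP; exists x.
exists h1 => x.
have := sk L HL cover x; rewrite unfold_in /L => /pbP [y ->].
have [H1 H2] := Hpsi' y.
apply/eqP; rewrite eq_sym -subr_eq0; apply/eqP.
by rewrite !linearB /= H1 H2 raddf0 !oppr0 addr0 opprB addrA addrC addrA addNr add0r subrr.
Qed.

Unset Implicit Arguments.

Theorem proposition5p6 (R : pzRingType) (T : rmodType R)
  (P : nat -> rmodType R) (d : forall n, {linear P n.+1 -> P n})
  (eps : {linear P 0 -> T}) :
  proj_resolution d eps ->
  syzygy1_has_proj_cover eps ->
  (tau_rigid T <-> forall M : rmodType R, Gen T M -> perp T M).
Proof.
move=> Hres Hcov; split; first exact: dir1.
exact: (dir2 Hres Hcov).
Qed.
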